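(* Let $\mathcal{X}$ be a finite set and $\underline{Q}$ a lower transition rate operator on $\mathcal{L}(\mathcal{X})$. Then for all $f\in\mathcal{L}(\mathcal{X})$, $x\in\mathcal{X}$ and $t,s>0$: $\underline{T}_tf(x)>\min f$ if and only if $\underline{T}_sf(x)>\min f$.
   Context: $\mathcal{L}(\mathcal{X})$ is the set of real-valued functions on $\mathcal{X}$ with pointwise operations and order, real constants identified with constant functions, $\mathbb{I}_y$ the indicator of $\{y\}$. A lower transition rate operator is a map $\underline{Q}\colon\mathcal{L}(\mathcal{X})\to\mathcal{L}(\mathcal{X})$ such that for all $f,g$, $\lambda\ge0$, $\mu\in\mathbb{R}$, $x,y\in\mathcal{X}$: $\underline{Q}(\mu)=0$; $\underline{Q}(f+g)\ge\underline{Q}f+\underline{Q}g$; $\underline{Q}(\lambda f)=\lambda\underline{Q}f$; $x\ne y\Rightarrow\underline{Q}(\mathbb{I}_y)(x)\ge0$. For each $f$, $t\mapsto\underline{T}_tf$ is the unique solution on $[0,\infty)$ of $\frac{d}{dt}\underline{T}_tf=\underline{Q}\,\underline{T}_tf$ with $\underline{T}_0f=f$ (existence and uniqueness are known). *)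

(* Defs.v *)
From HB Require Import structures.
From mathcomp Require Import all_boot all_order all_algebra.
From mathcomp Require Import all_classical all_reals all_analysis.
Set Implicit Arguments. Unset Strict Implicit. Unset Printing Implicit Defensive.
Import Order.TTheory GRing.Theory Num.Theory.
Import numFieldNormedType.Exports.
Local Open Scope ring_scope.
Local Open Scope classical_set_scope.

Definition indic (R : realType) (X : finType) (y : X) : X -> R :=
  fun z => if z == y then 1 else 0.

Definition lower_rate_op (R : realType) (X : finType)
  (Q : (X -> R) -> (X -> R)) : Prop :=
  [/\ (forall mu : R, Q (fun _ => mu) = (fun _ => 0)),
      (forall f g x, Q f x + Q g x <= Q (fun z => f z + g z) x),
      (forall (lam : R) f, 0 <= lam -> Q (fun z => lam * f z) = (fun z => lam * Q f z))
    & (forall x y : X, x != y -> 0 <= Q (indic R y) x)].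

(* T : [0,oo) -> L(X) solves d/dt T_t = Q T_t on [0,oo) with T_0 = f
   (derivative taken componentwise; one-sided (right) derivative at 0). *)
Definition is_lower_semigroup_traj (R : realType) (X : finType)
  (Q : (X -> R) -> (X -> R)) (f : X -> R) (T : R -> X -> R) : Prop :=
  [/\ T 0 = f,
      (forall x, (fun h : R => h^-1 * (T h x - T 0 x)) @ 0^'+ --> Q (T 0) x)
    & (forall (t : R) x, 0 < t ->
         derivable (fun u : R => T u x) t 1 /\
         'D_1 (fun u : R => T u x) t = Q (T t) x)].

(* min f, with default value f x0 for the (nonempty) big min. *)
Definition fmin (R : realType) (X : finType) (f : X -> R) (x0 : X) : R :=
  \big[Order.min/f x0]_(y : X) f y.

(* Main.v *)
Require Import Defs.
From HB Require Import structures.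
From mathcomp Require Import all_boot all_order all_algebra.
From mathcomp Require Import all_classical all_reals all_analysis.
From mathcomp Require Import ring lra.
Import Order.TTheory GRing.Theory Num.Theory.
Import numFieldNormedType.Exports.
Local Open Scope ring_scope.
Local Open Scope classical_set_scope.

Section S.
Variable R : realType.
Lemma der_aff (g : R -> R) (t dg : R) (sg a b : R) : is_derive t 1 g dg ->
  is_derive t 1 (fun u => sg * g u + (a + b * u)) (sg * dg + b).
Proof.
move=> Hg.
have H1 := is_deriveZ sg Hg.
have H2 := is_deriveZ b (@is_derive_id _ _ t 1).
have H3 := is_deriveD (@is_derive_cst _ _ _ a t 1) H2.
have := is_deriveD H1 H3.
rewrite add0r /= [b *: 1]mulr1.
by [].
Qed.

Lemma der_exp (g : R -> R) (t dg : R) (al be ga : R) : is_derive t 1 g dg ->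
  is_derive t 1 (fun u => g u - al * expR (be * u + ga)) (dg - al * (be * expR (be * t + ga))).
Proof.
move=> Hg.
have Hi : is_derive t 1 (fun u => be * u + ga) be.
  have := @der_aff id t 1 0 ga be (@is_derive_id _ _ t 1).
  rewrite mul0r add0r /=.
  have -> : (fun u : R => 0 * id u + (ga + be * u)) = (fun u => be * u + ga).
    by apply: funext => u; rewrite mul0r add0r addrC.
  by [].
have He : is_derive t 1 (fun u => expR (be * u + ga)) (be * expR (be * t + ga)).
  apply: DeriveDef.
    apply/derivable1_diffP; apply: (differentiable_comp (f := fun u => be * u + ga) (g := expR)).
      by apply/derivable1_diffP; apply: ex_derive.
    by apply/derivable1_diffP; apply: derivable_expR.
  rewrite -derive1E (derive1_comp (f := fun u => be * u + ga) (g := expR)).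
  - rewrite !derive1E.
    have -> : 'D_1 (fun u : R => be * u + ga) t = be by apply: derive_val.
    have -> : 'D_1 expR (be * t + ga) = expR (be * t + ga).
      by apply: derive_val.
    by rewrite mulrC.

  - exact: ex_derive.
  - exact: derivable_expR.
have := is_deriveB Hg (is_deriveZ al He).
by [].
Qed.

Lemma D_left_le (f : R -> R) a c : a < c -> derivable f c 1 ->
  (forall t, a < t -> t < c -> f c <= f t) -> 'D_1 f c <= 0.
Proof.
move=> ac dfc cmin.
rewrite ['D_1 f c]cvg_at_leftE; last exact: dfc.
apply: limr_le.
  rewrite -(cvg_at_leftE (fun h => h^-1 *: ((f \o shift c) _ - f c))) //.
  apply: cvg_trans dfc; apply: cvg_app.
  move=> A [e egt0 Ae]; exists e => // x xe xgt0; apply: Ae => //.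
  exact/ltr0_neq0.
near=> h; apply: mulr_le0_ge0.
  by rewrite invr_le0; apply: ltW; near: h; exists 1 => /=.
rewrite subr_ge0 [_%:A]mulr1; apply: cmin; near: h.
  exists (c - a); first by rewrite /= subr_gt0.
  move=> h; rewrite /= distrC subr0.
  by move=> /ltr_normlP []; rewrite ltrBrDl ltrBlDl.
by exists 1 => //= h _ h0; rewrite gtrDr.
Unshelve. all: by end_near. Qed.
Lemma near_right_ex (a : R) (P : R -> Prop) : (\forall u \near a^'+, P u) ->
  exists2 e : R, 0 < e & forall u, a < u -> u < a + e -> P u.
Proof.
move=> /nbhs_ballP [e e0 He]; exists e => // u au ue; apply: He => //.
rewrite /ball /= ltr_distlC; apply/andP; split => //.
by rewrite ltrBlDr (lt_le_trans au) // lerDl ltW.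
Qed.
Lemma near_ex (a : R) (P : R -> Prop) : (\forall u \near a, P u) ->
  exists2 e : R, 0 < e & forall u, a - e < u -> u < a + e -> P u.
Proof.
move=> /nbhs_ballP [e e0 He]; exists e => // u au ue; apply: He => //.
by rewrite /ball /= ltr_distlC au ue.
Qed.
Lemma der_cont (f : R -> R) c : derivable f c 1 -> f @ c --> f c.
Proof. by move=> /derivable1_diffP /differentiable_continuous. Qed.
Lemma pick_left (a tau e : R) : a < tau -> 0 < e ->
  exists u, [/\ a < u, u < tau & tau - e < u].
Proof.
move=> h1 h2; case: (leP e (tau - a)) => h;
  [exists (tau - e/2) | exists ((a+tau)/2)]; split; lra.
Qed.

Lemma barrier (X : finType) (F : X -> R -> R) (a : R) :
  (forall x, 0 < F x a) ->
  (forall x, F x @ a^'+ --> F x a) ->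
  (forall x t, a < t -> derivable (F x) t 1) ->
  (forall x t, a < t -> (forall y, 0 <= F y t) -> F x t = 0 -> 0 < 'D_1 (F x) t) ->
  forall x t, a <= t -> 0 < F x t.
Proof.
move=> H0 Hc Hd Hb x b; rewrite le_eqVlt => /predU1P [<-|ab]; first exact: H0.
rewrite ltNge; apply/negP => Hxb.
pose S := [set t | a <= t /\ forall u y, a <= u -> u <= t -> 0 < F y u].
have Sa : S a.
  split => // u y au ua; have -> : u = a by apply/eqP; rewrite eq_le ua au.
  exact: H0.
have Sub : forall t, S t -> t < b.
  move=> t [_ Ht]; rewrite ltNge; apply/negP => bt.
  by move: (Ht b x (ltW ab) bt); rewrite ltNge Hxb.
have S0 : S !=set0 by exists a.
have hsS : has_ubound S by exists b => t /Sub /ltW.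
set tau := sup S.
have Hpos : forall u y, a <= u -> u < tau -> 0 < F y u.
  move=> u y au ut; have [t [_ St] ut'] := sup_gt S0 ut.
  exact: (St u y au (ltW ut')).
have atau : a < tau.
  have : \forall u \near a^'+, forall y, 0 < F y u.
    by apply: filter_forall => y; exact: (cvgr_gt _ (Hc y) _ (H0 y)).
  case/near_right_ex => e e0 He.
  have Su0 : S (a + e/2).
    split; first lra.
    move=> u y au ue; move: au; rewrite le_eqVlt => /predU1P [<-|au].
      exact: H0.
    apply: He => //; lra.
  have := ub_le_sup hsS Su0; rewrite -/tau; lra.
have Hd' y : F y @ tau --> F y tau := @der_cont (F y) tau (Hd y tau atau).
have Hge y : 0 <= F y tau.
  rewrite leNgt; apply/negP => Fneg.
  have [e e0 He] := @near_ex tau _ (cvgr_lt _ (Hd' y) 0 Fneg).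
  have [u [u1 u2 u3]] := @pick_left a tau e atau e0.
  have := Hpos u y (ltW u1) u2; have := He u u3 ltac:(lra); lra.
have [x0 Hx0] : exists x0, F x0 tau = 0.
  apply: contrapT => Hn.
  have Hgt y : 0 < F y tau.
    rewrite lt_neqAle Hge andbT eq_sym; apply/eqP => h; apply: Hn; by exists y.
  have : \forall u \near tau, forall y, 0 < F y u.
    exact: (@filter_forall R X (fun y u => 0 < F y u) _ _ (fun y => cvgr_gt _ (Hd' y) _ (Hgt y))).
  move=> /(@near_ex tau _) [e e0 He].
  have Su1 : S (tau + e/2).
    split; first lra.
    move=> u y au ue; case: (ltP u tau) => h; first exact: Hpos.
    apply: He; lra.
  have := ub_le_sup hsS Su1; rewrite -/tau; lra.
have := Hb x0 tau atau Hge Hx0.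
have := @D_left_le (F x0) a tau atau (Hd x0 tau atau).
have H : forall t, a < t -> t < tau -> F x0 tau <= F x0 t.
  by move=> t at' tt; rewrite Hx0; apply: ltW; apply: Hpos => //; apply: ltW.
move=> /(_ H); lra.
Qed.

Section Main.
Variables (X : finType) (Q : (X -> R) -> (X -> R)) (f0 : X -> R) (T : R -> X -> R) (x0 : X).
Hypothesis HQ : lower_rate_op Q.
Hypothesis HT : is_lower_semigroup_traj Q f0 T.


Lemma Qcst (c : R) : Q (fun _ => c) = (fun _ => 0).
Proof. by case: HQ. Qed.
Lemma Qsup f g x : Q f x + Q g x <= Q (fun z => f z + g z) x.
Proof. by case: HQ. Qed.
Lemma Qhom (lam : R) f : 0 <= lam -> Q (fun z => lam * f z) = (fun z => lam * Q f z).
Proof. by case: HQ => _ _ H _; apply: H. Qed.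
Lemma Qoff x y : x != y -> 0 <= Q (Defs.indic R y) x.
Proof. by case: HQ => _ _ _ H; apply: H. Qed.

Lemma Qc g c : Q (fun z => g z + c) = Q g.
Proof.
apply: funext => x; apply/eqP; rewrite eq_le; apply/andP; split.
  have := Qsup (fun z => g z + c) (fun _ => - c) x.
  rewrite Qcst addr0.
  have -> : (fun z => g z + c + - c) = g by apply: funext => z; rewrite addrK.
  by [].
have := Qsup g (fun _ => c) x; rewrite Qcst addr0; exact.
Qed.

Lemma Qsum (s : seq X) (c : X -> R) x : (forall y, 0 <= c y) ->
  \sum_(y <- s) c y * Q (Defs.indic R y) x <= Q (fun z => \sum_(y <- s) c y * Defs.indic R y z) x.
Proof.
move=> c0; elim: s => [|y s IH].
  rewrite big_nil.
  have -> : (fun z => \sum_(y <- [::]) c y * Defs.indic R y z) = (fun _ => 0).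
    by apply: funext => z; rewrite big_nil.
  by rewrite Qcst.
rewrite big_cons.
have -> : (fun z => \sum_(w <- y :: s) c w * Defs.indic R w z) =
  (fun z => (fun z => c y * Defs.indic R y z) z + (fun z => \sum_(w <- s) c w * Defs.indic R w z) z).
  by apply: funext => z; rewrite big_cons.
apply: le_trans (Qsup _ _ x).
by rewrite (Qhom _ _ (c0 y)) lerD2l.
Qed.

Lemma Qi g x : (forall z, 0 <= g z) -> g x = 0 -> 0 <= Q g x.
Proof.
move=> g0 gx.
pose c y := if y == x then 0 else g y.
have c0 y : 0 <= c y by rewrite /c; case: eqP.
have -> : g = (fun z => \sum_(y <- index_enum X) c y * Defs.indic R y z).
  apply: funext => z; rewrite (bigD1 z) //= big1 ?addr0.
    rewrite /Defs.indic eqxx mulr1 /c; case: eqP => [->|//]; by rewrite gx.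
  by move=> y /negbTE yz; rewrite /Defs.indic eq_sym yz mulr0.
apply: (le_trans _ (Qsum _ _ x c0)); apply: sumr_ge0 => y _.
rewrite /c; case: eqP => [_|/eqP yx]; first by rewrite mul0r.
by apply: mulr_ge0 => //; apply: Qoff; rewrite eq_sym.
Qed.

Lemma Qii g x : (forall z, 0 <= g z) -> g x * Q (Defs.indic R x) x <= Q g x.
Proof.
move=> g0.
pose h z := g z - g x * Defs.indic R x z.
have h0 z : 0 <= h z.
  rewrite /h /Defs.indic; case: (z =P x) => [->|_]; first by rewrite mulr1 subrr.
  by rewrite mulr0 subr0.
have hx : h x = 0 by rewrite /h /Defs.indic eqxx mulr1 subrr.
have Hg : g = (fun z => h z + (fun z => g x * Defs.indic R x z) z).
  by apply: funext => z; rewrite /h subrK.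
rewrite {2}Hg.
apply: le_trans (Qsup _ _ x).
rewrite (Qhom _ _ (g0 x)) lerDr; exact: Qi.
Qed.


Local Notation c := (fmin f0 x0).

Lemma T0 : T 0 = f0. Proof. by case: HT. Qed.
Lemma Tder (z : X) (t : R) : 0 < t -> is_derive t 1 (fun u => T u z) (Q (T t) z).
Proof. by move=> t0; case: HT => _ _ /(_ t z t0) [h1 h2]; apply: DeriveDef. Qed.
Lemma cle (z : X) : c <= f0 z.
Proof. exact: bigmin_le. Qed.

Lemma Tcont0 (z : X) : (fun h => T h z) @ 0^'+ --> T 0 z.
Proof.
case: HT => _ /(_ z) Hq _.
have H1 : (fun h : R => h * (h^-1 * (T h z - T 0 z))) @ 0^'+ --> 0 * Q (T 0) z.
  apply: cvgM => //; apply: cvg_at_right_filter; exact: cvg_id.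
rewrite mul0r in H1.
have H2 : (fun h => T h z - T 0 z) @ 0^'+ --> 0.
  apply: cvg_trans H1; apply: near_eq_cvg; near=> h; rewrite mulVKf //.
have K := cvgD H2 (cvg_cst (T 0 z)); rewrite add0r in K.
have E : (fun h => T h z - T 0 z) + cst (T 0 z) = (fun h => T h z).
  by apply: funext => h /=; rewrite subrK.
rewrite E in K; exact: K.
Unshelve. all: by end_near. Qed.

Lemma Tge (t : R) (z : X) : 0 <= t -> c <= T t z.
Proof.
move=> t0; apply/ler_addgt0Pr => e e0.
pose ep := e / (1 + t).
have ep0 : 0 < ep by apply: divr_gt0 => //; lra.
have Hep : ep + ep * t = e.
  rewrite -{1}[ep]mulr1 -mulrDr /ep divfK //; apply: lt0r_neq0; lra.
pose F (w : X) (u : R) := 1 * (T u w) + ((- c + ep) + ep * u).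
have HB : 0 < F z t.
  apply: (@barrier X F 0) => //.
  - move=> w; rewrite /F T0 mulr0 addr0 mul1r; have := cle w; lra.
  - move=> w; rewrite /F.
    apply: cvgD; first by apply: cvgM; [exact: cvg_cst | exact: Tcont0].
    apply: cvgD; first exact: cvg_cst.
    apply: cvgM; first exact: cvg_cst.
    apply: cvg_at_right_filter; exact: cvg_id.
  - by move=> w u u0; apply: ex_derive; apply: der_aff; apply: Tder.
  - move=> w u u0 Hall Hw.
    have D := @der_aff _ _ _ 1 (-c + ep) ep (Tder w u u0).
    have -> : 'D_1 (F w) u = 1 * Q (T u) w + ep by apply: derive_val.
    suff : 0 <= Q (T u) w by lra.
    rewrite -(Qc (T u) (- T u w)); apply: Qi; last by rewrite subrr.
    move=> v; move: (Hall v) Hw; rewrite /F !mul1r; lra.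
move: HB.
rewrite /F mul1r; lra.
Qed.

Lemma persist (z : X) (t0 t : R) : 0 < t0 -> t0 <= t -> c < T t0 z -> c < T t z.
Proof.
move=> h0 h1 h2.
set k := Q (Defs.indic R z) z.
set be := k - 1.
set al := (T t0 z - c) / 2.
set ga := - (be * t0).
pose g u := 1 * T u z + (-c + 0 * u).
have Dg (u : R) : 0 < u -> is_derive u 1 g (1 * Q (T u) z + 0).
  by move=> u0; apply: der_aff; apply: Tder.
pose F (w : X) u := g u - al * expR (be * u + ga).
have DF (u : R) : 0 < u -> is_derive u 1 (F z) ((1 * Q (T u) z + 0) - al * (be * expR (be * u + ga))).
  by move=> u0; apply: der_exp; apply: Dg.
have HB : 0 < F z t.
  apply: (@barrier X F t0) => //.
  - move=> w; rewrite /F /g /ga subrr expR0 mulr1 mul1r mul0r addr0 /al; lra.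
  - move=> w; apply: cvg_at_right_filter; apply: der_cont; apply: ex_derive; exact: DF.
  - by move=> w u u0; apply: ex_derive; apply: DF; lra.
  - move=> w u u0 Hall Hw.
    have u0' : 0 < u by lra.
    have D := DF u u0'.
    have -> : 'D_1 (F w) u = (1 * Q (T u) z + 0) - al * (be * expR (be * u + ga)) by apply: derive_val.
    set E := expR (be * u + ga).
    have E0 : 0 < E by exact: expR_gt0.
    have hG : T u z - c = al * E by move: Hw; rewrite /F /g mul1r mul0r addr0 -/E; lra.
    have al0 : 0 < al by rewrite /al; lra.
    have alE0 : 0 < al * E by apply: mulr_gt0.
    have HQ1 : (T u z + - c) * k <= Q (T u) z.
      rewrite -(Qc (T u) (- c)); apply: Qii => v.
      by have := Tge u v (ltW u0'); lra.
    have e1 : al * (be * E) = (al * E) * k - al * E by rewrite /be; ring.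
    rewrite hG in HQ1; lra.
move: HB.
rewrite /F /g mul1r mul0r addr0 => H.
  have : 0 < al * expR (be * t + ga) by apply: mulr_gt0; [rewrite /al; lra | exact: expR_gt0].
  lra.
Qed.

Lemma Qneg (u : R) (y : X) : 0 < u -> T u y = c -> Q (T u) y <= 0.
Proof.
move=> u0 Hy.
have D := Tder y u u0.
have dD : derivable (fun v => T v y) u 1 by apply: ex_derive.
have := @D_left_le (fun v => T v y) 0 u u0 dD.
have -> : 'D_1 (fun v => T v y) u = Q (T u) y by apply: derive_val.
apply => v v0 _; rewrite Hy; apply: Tge; exact: ltW.
Qed.

Lemma key (u : R) (a : X -> R) (y : X) : 0 < u -> (forall w, 0 <= a w) ->
  (forall w, T u w = c -> a w = 0) -> T u y = c -> Q a y <= 0.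
Proof.
move=> u0 a0 aZ Hy.
have G0 w : 0 <= T u w - c by have := Tge u w (ltW u0); lra.
pose Cst := \sum_(w | T u w != c) a w / (T u w - c).
have Cst0 : 0 <= Cst by apply: sumr_ge0 => w _; apply: divr_ge0.
pose k := fun w => Cst * (T u w - c) - a w.
have k0 w : 0 <= k w.
  rewrite /k subr_ge0; case: (T u w =P c) => [e|/eqP ne].
    by rewrite e subrr mulr0 (aZ w e).
  have Gn : T u w - c != 0 by rewrite subr_eq0.
  have : a w / (T u w - c) <= Cst.
    rewrite /Cst (bigD1 w) //= lerDl; apply: sumr_ge0 => v _; exact: divr_ge0.
  move=> /(ler_wpM2r (G0 w)); rewrite divfK //.
have ky : k y = 0 by rewrite /k Hy subrr mulr0 (aZ y Hy) subrr.
have Hsum : (fun w => Cst * (T u w - c)) = (fun w => k w + a w).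
  by apply: funext => w; rewrite /k subrK.
have := Qsup k a y.
rewrite -Hsum.
have -> : Q (fun w => Cst * (T u w - c)) y = Cst * Q (T u) y.
  by rewrite (Qhom Cst (fun w => T u w - c) Cst0) Qc.
have := Qi k y k0 ky.
have := mulr_ge0_le0 Cst0 (@Qneg u y u0 Hy).
lra.
Qed.

Lemma stay (u : R) (z : X) : 0 < u -> T u z = c -> forall t, u <= t -> T t z = c.
Proof.
move=> u0 Hz t ut.
apply/eqP; rewrite eq_le (Tge t z (ltW (lt_le_trans u0 ut))) andbT.
apply/ler_addgt0Pr => e e0.
pose d := 1 + t - u.
have d0 : 0 < d by rewrite /d; lra.
pose ep := e / d.
have ep0 : 0 < ep by apply: divr_gt0.
have Hep : ep * d = e by rewrite /ep divfK //; apply: lt0r_neq0.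
pose A := ep - ep * u + c.
pose F (w : X) := if T u w == c then (fun v => -1 * T v w + (A + ep * v)) else cst ep.
have HB : 0 < F z t.
  apply: (@barrier X F u) => //.
  - move=> w; rewrite /F; case: ifP => [/eqP h|_] //.
    rewrite h /A; lra.
  - move=> w; rewrite /F; case: ifP => _; last exact: cvg_cst.
    apply: cvg_at_right_filter; apply: der_cont; apply: ex_derive.
    apply: der_aff; exact: Tder.
  - move=> w v uv; rewrite /F; case: ifP => _; last exact: derivable_cst.
    apply: ex_derive; apply: der_aff; apply: Tder; lra.
  - move=> w v uv Hall; rewrite /F; case: ifP => [/eqP hw|_] Hw; last by move: Hw; rewrite /cst => Hw; lra.
    have v0 : 0 < v by lra.
    have D := @der_aff _ _ _ (-1) A ep (Tder w v v0).
    have -> : 'D_1 (fun v => -1 * T v w + (A + ep * v)) v = -1 * Q (T v) w + ep by apply: derive_val.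
    suff : Q (T v) w <= 0 by lra.
    pose m := T v w - c.
    have Zle v' : T u v' = c -> T v v' - c <= m.
      move=> h; move: (Hall v'); rewrite /F h eqxx /m; lra.
    pose a := fun v' => if T u v' == c then 0 else T v v' - c.
    pose b := fun v' => if T u v' == c then T v v' - c else 0.
    have Gab : (fun v' => (T v v' - c) + - b v') = a.
      by apply: funext => v'; rewrite /a /b; case: ifP => _; rewrite ?subrr ?subr0.
    have H1 := Qsup (fun v' => T v v' - c) (fun v' => - b v') w.
    rewrite Gab Qc in H1.
    have H2 : Q a w <= 0.
      apply: (@key u) => //.
      - move=> v'; rewrite /a; case: ifP => _ //; have := Tge v v' (ltW v0); lra.
      - by move=> v' h; rewrite /a h eqxx.
    have H3 : 0 <= Q (fun v' => - b v') w.
      have -> : (fun v' => - b v') = (fun v' => (m - b v') + - m).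
        by apply: funext => v'; rewrite addrAC subrr add0r.
      rewrite Qc.
      have bw : b w = m by rewrite /b hw eqxx.
      have := Qii (fun v' => m - b v') w.
      rewrite bw subrr mul0r; apply => v'.
      rewrite /b; case: ifP => [/eqP h|_]; first by have := Zle v' h; lra.
      rewrite subr0 /m; have := Tge v w (ltW v0); lra.
    lra.
move: HB.
rewrite /F Hz eqxx => H.
  have e1 : ep * d = ep + ep * t - ep * u by rewrite /d; ring.
  rewrite /A in H; lra.
Qed.

Lemma dir (x : X) (t s : R) : 0 < t -> 0 < s -> c < T t x -> c < T s x.
Proof.
move=> t0 s0 h; case: (leP t s) => ts; first exact: (@persist x t s).
rewrite lt_neqAle (Tge s x (ltW s0)) andbT; apply/eqP => e.
have := @stay s x s0 (esym e) t (ltW ts); lra.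
Qed.

End Main.

End S.
Theorem lemma7 (R : realType) (X : finType) (Q : (X -> R) -> (X -> R))
  (f : X -> R) (T : R -> X -> R) :
  lower_rate_op Q -> is_lower_semigroup_traj Q f T ->
  forall (x : X) (t s : R), 0 < t -> 0 < s ->
    (fmin f x < T t x <-> fmin f x < T s x).
Proof.
move=> HQ HT x t s t0 s0; split => h.
- exact: (@dir R X Q f T x HQ HT x t s t0 s0 h).
- exact: (@dir R X Q f T x HQ HT x s t s0 t0 h).
Qed.
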